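(* Let $A$ be a bounded distributive lattice with Priestley space $X$, and let $S\subseteq A$ be such that $\bigvee_A S$ exists. Then $\bigvee_A S$ is distributive if and only if $\mathfrak s(\bigvee_A S)={\sf cl}\bigcup_{s\in S}\mathfrak s(s)$.
   Context: A join $\bigvee_A S$ is distributive if $a\wedge\bigvee_A S=\bigvee_A\{a\wedge s:s\in S\}$ for all $a\in A$. The Priestley space $X$ of $A$ is the set of prime filters of $A$ ordered by inclusion, with topology generated by the basis $\{\mathfrak s(a)\setminus\mathfrak s(b):a,b\in A\}$, where $\mathfrak s(a)=\{x\in X:a\in x\}$; ${\sf cl}$ denotes topological closure in $X$. *)

(* Defs.v *)
From HB Require Import structures.
From mathcomp Require Import all_boot all_order.
From mathcomp Require Import boolp classical_sets.
Set Implicit Arguments. Unset Strict Implicit. Unset Printing Implicit Defensive.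

Local Open Scope classical_set_scope.

Section Priestley.
Context {disp : Order.disp_t} {A : tbDistrLatticeType disp}.

Definition prime_filter (x : set A) : Prop :=
  [/\ x (Order.top : A), ~ x (Order.bottom : A),
      (forall a b : A, x a -> (a <= b)%O -> x b),
      (forall a b : A, x a -> x b -> x (Order.meet a b)) &
      (forall a b : A, x (Order.join a b) -> x a \/ x b)].

Definition pspace := {x : set A | prime_filter x}.

Definition sfrak (a : A) : set pspace := [set x | proj1_sig x a].

Definition basic_open (U : set pspace) : Prop :=
  exists a b : A, U = sfrak a `\` sfrak b.

Definition popen (U : set pspace) : Prop :=
  forall x, U x -> exists B, basic_open B /\ B x /\ B `<=` U.

Definition pclosure (Y : set pspace) : set pspace :=
  [set x | forall U, popen U -> U x -> U `&` Y !=set0].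

Definition is_join (S : set A) (j : A) : Prop :=
  (forall s, S s -> (s <= j)%O) /\
  (forall u, (forall s, S s -> (s <= u)%O) -> (j <= u)%O).

Definition distributive_join (S : set A) (j : A) : Prop :=
  forall a : A, is_join [set Order.meet a s | s in S] (Order.meet a j).

End Priestley.

(* Main.v *)
Require Import Defs.
From mathcomp Require Import all_boot all_order.
From mathcomp Require Import boolp classical_sets.
Local Open Scope classical_set_scope.
Import Order.TTheory.
Local Open Scope order_scope.

Section PFT.
Context {disp : Order.disp_t} {A : tbDistrLatticeType disp}.

Definition Pf (p q : A) (F : set A) : Prop :=
  [/\ (forall a b, F a -> a <= b -> F b), (forall a b, F a -> F b -> F (a `&` b)),
      ~ F q & (F = set0 \/ F p)].

Lemma pft (p q : A) : ~ (p <= q) -> exists x : @pspace _ A, proj1_sig x p /\ ~ proj1_sig x q.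
Proof.
move=> npq.
have [M [[Mup Mmeet Mq Mp] Mmax]] : exists M, Pf p q M /\ forall B, M `<` B -> ~ Pf p q B.
  apply: Zorn_bigcup => F FP Ftot; split.
  - move=> a b [X FX Xa] ab; exists X => //; have [H _ _ _] := FP X FX; exact: H Xa ab.
  - move=> a b [X FX Xa] [Y FY Yb].
    have [XY|YX] := Ftot X Y FX FY.
    + by exists Y => //; have [_ H _ _] := FP Y FY; apply: H => //; apply: XY.
    + by exists X => //; have [_ H _ _] := FP X FX; apply: H => //; apply: YX.
  - by move=> [X FX Xq]; have [_ _ H _] := FP X FX; apply: H.
  - have [[X FX Xp]|] := pselect (exists2 X, F X & X p).
      by right; exists X.
    move=> nX; left; apply/seteqP; split => // a [X FX Xa].
    have [_ _ _ [X0|]] := FP X FX; first by rewrite X0 in Xa.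
    by move=> Xp; apply: nX; exists X.
have {}Mp : M p.
  case: Mp => // M0; exfalso; apply: (Mmax [set c | p <= c]).
  - rewrite M0; split => // /(_ p (lexx p)) //.
  - split => /=.
    + by move=> a b pa ab; exact: le_trans ab.
    + by move=> a b pa pb; rewrite lexI pa pb.
    + exact: npq.
    + by right; exact: lexx.
have gen : forall a, ~ M a -> exists2 f, M f & f `&` a <= q.
  move=> a Ma; apply: contrapT => nex.
  apply: (Mmax [set c | exists2 f, M f & f `&` a <= c]).
  - split.
    + by move=> c Mc; exists c => //; exact: leIl.
    + by move=> Ma'; apply: Ma; apply: Ma'; exists p => //; exact: leIr.
  - split.
    + by move=> c d [f Mf fc] cd; exists f => //; exact: le_trans cd.
    + move=> c d [f Mf fc] [g Mg gd]; exists (f `&` g); first exact: Mmeet.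
      rewrite lexI; apply/andP; split.
      * apply: le_trans fc; rewrite lexI leIr andbT; apply: le_trans (leIl _ _) _; exact: leIl.
      * apply: le_trans gd; rewrite lexI leIr andbT; apply: le_trans (leIl _ _) _; exact: leIr.
    + move=> [f Mf fq]; apply: nex; by exists f.
    + by right; exists p => //; exact: leIl.
have Mtop : M \top := Mup _ _ Mp (lex1 _).
have prime : forall a b, M (a `|` b) -> M a \/ M b.
  move=> a b Mab; apply: contrapT => /not_orP[Ma Mb].
  have [f Mf fa] := gen a Ma; have [g Mg gb] := gen b Mb.
  apply: Mq; apply: (Mup ((f `&` g) `&` (a `|` b))); first exact: Mmeet (Mmeet _ _ Mf Mg) Mab.
  rewrite meetUr leUx; apply/andP; split.
  - apply: le_trans fa; by rewrite leI2 // leIl.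
  - apply: le_trans gb; by rewrite leI2 // leIr.
have pf : prime_filter M by split => // Mb; apply: Mq; exact: (Mup _ _ Mb (le0x _)).
by exists (exist _ M pf).
Qed.

Lemma pf_up {x : @pspace _ A} {a b} : proj1_sig x a -> a <= b -> proj1_sig x b.
Proof. by case: x => X [? ? H ? ?] /=; apply: H. Qed.

Lemma pf_meet {x : @pspace _ A} {a b} : proj1_sig x a -> proj1_sig x b -> proj1_sig x (a `&` b).
Proof. by case: x => X [? ? ? H ?] /=; apply: H. Qed.

Lemma pf_top (x : @pspace _ A) : proj1_sig x \top.
Proof. by case: x => X [? ? ? ? ?]. Qed.

Lemma basic_popen (a b : A) : popen (sfrak a `\` sfrak b).
Proof. by move=> x Bx; exists (sfrak a `\` sfrak b); split; [exists a, b | split]. Qed.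

End PFT.

Theorem theorem5p16 (disp : Order.disp_t) (A : tbDistrLatticeType disp)
    (S : set A) (j : A) :
  is_join S j ->
  (distributive_join S j <->
   sfrak j = pclosure (\bigcup_(s in S) sfrak s)).
Proof.
move=> [jub jleast].
have clsub : pclosure (\bigcup_(s in S) sfrak s) `<=` sfrak j.
  move=> x xcl; apply: contrapT => nj.
  have [y [[_ yj] [s Ss ys]]] := xcl _ (basic_popen \top j) (conj (pf_top x) nj).
  by apply: yj; apply: pf_up ys (jub s Ss).
split.
- move=> dist; apply/seteqP; split => //.
  move=> x xj W Wo Wx.
  have [B [[a [b BE]] [Bx BW]]] := Wo x Wx; subst B.
  case: Bx => xa xb.
  apply: contrapT => nI.
  have ajb : a `&` j <= b.
    apply: (dist a).2 => _ [s Ss <-].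
    apply: contrapT => nle.
    have [y [ya yb]] := pft _ _ nle.
    apply: nI; exists y; split.
    + apply: BW; split => //; exact: pf_up ya (leIl _ _).
    + by exists s => //; exact: pf_up ya (leIr _ _).
  by apply: xb; apply: pf_up (pf_meet xa xj) ajb.
- move=> heq a; split.
  + by move=> _ [s Ss <-]; rewrite leI2 // jub.
  + move=> u ub; apply: contrapT => nle.
    have [x [xaj xu]] := pft _ _ nle.
    have xj : sfrak j x := pf_up xaj (leIr _ _).
    rewrite heq in xj.
    have [y [[ya yu] [s Ss ys]]] := xj _ (basic_popen a u) (conj (pf_up xaj (leIl _ _)) xu).
    by apply: yu; apply: pf_up (pf_meet ya ys) (ub _ _); exists s.
Qed.
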